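(* Let $x$ be a Bertrand D-curve and $x_1$ a Bertrand partner D-curve of $x$. Then: (i) if $x$ is a geodesic curve, the geodesic torsion of $x_1$ is $\tau_{g_1} = \tau_g\cos\theta\,[\cos\theta - \lambda\tau_g\sin\theta]\left(\dfrac{ds}{ds_1}\right)^2$; (ii) if $x$ is a principal line, then $\tau_{g_1} = k_g(1+\lambda k_g)\sin\theta\cos\theta\left(\dfrac{ds}{ds_1}\right)^2$.
   Context: For a unit-speed curve $x(s)$ on an oriented surface $S\subset\mathbb{E}^3$, the Darboux frame is $\{T,g,n\}$ ($T$ unit tangent, $n$ unit surface normal along the curve, $g=n\times T$), with $\dot T = k_g g + k_n n$, $\dot g = -k_g T + \tau_g n$, $\dot n = -k_n T - \tau_g g$; $k_g,k_n,\tau_g$ are the geodesic curvature, normal curvature and geodesic torsion. For $x_1(s_1)$ on an oriented surface $S_1$ the analogous objects carry subscript $1$. $x$ is a Bertrand D-curve with Bertrand partner D-curve $x_1$ if there is a correspondence of points such that at corresponding points $g$ coincides with $g_1$; then $x(s)=x_1(s_1)+\lambda g_1(s_1)$ with $\lambda$ a nonzero constant, and $s$ is a function of $s_1$. $\theta$ is the angle between $T$ and $T_1$, oriented so that $T_1=\cos\theta\,T+\sin\theta\,n$, $n_1=-\sin\theta\,T+\cos\theta\,n$. Geodesic means $k_g=0$; principal line means $\tau_g=0$. *)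

(* Defs.v *)
From Stdlib Require Import Reals.
From Coquelicot Require Import Coquelicot.
Open Scope R_scope.

Definition V3 : Type := ((R * R) * R)%type.

Definition mkV3 (a b c : R) : V3 := ((a, b), c).

Definition lc2 (a : R) (u : V3) (b : R) (v : V3) : V3 :=
  plus (scal a u) (scal b v).

Definition dot (u v : V3) : R :=
  let '((u1, u2), u3) := u in let '((v1, v2), v3) := v in
  u1 * v1 + u2 * v2 + u3 * v3.

Definition cross (u v : V3) : V3 :=
  let '((u1, u2), u3) := u in let '((v1, v2), v3) := v in
  mkV3 (u2 * v3 - u3 * v2) (u3 * v1 - u1 * v3) (u1 * v2 - u2 * v1).

(* A unit-speed curve x(s), s in the open interval (a,b), on an oriented
   surface, with its Darboux frame {T, g, n} (n = unit surface normal along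
   the curve, g = n x T) and geodesic curvature kg, normal curvature kn,
   geodesic torsion tg, given by the Darboux equations. *)
Definition darboux_curve (a b : R) (x T g n : R -> V3) (kg kn tg : R -> R) : Prop :=
  forall s, a < s < b ->
    is_derive x s (T s) /\
    dot (T s) (T s) = 1 /\ dot (n s) (n s) = 1 /\ dot (T s) (n s) = 0 /\
    g s = cross (n s) (T s) /\
    is_derive T s (lc2 (kg s) (g s) (kn s) (n s)) /\
    is_derive g s (lc2 (- kg s) (T s) (tg s) (n s)) /\
    is_derive n s (lc2 (- kn s) (T s) (- tg s) (g s)).

(* Main.v *)
Require Import Defs.
From Stdlib Require Import Reals.
From Coquelicot Require Import Coquelicot.
Open Scope R_scope.
From Stdlib Require Import Lra.

Lemma dot_plus (u v w : V3) : dot (plus u v) w = dot u w + dot v w.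
Proof. destruct u as [[u1 u2] u3], v as [[v1 v2] v3], w as [[w1 w2] w3].
 cbn. ring. Qed.
Lemma dot_scal (k : R) (u w : V3) : dot (scal k u) w = k * dot u w.
Proof. destruct u as [[u1 u2] u3], w as [[w1 w2] w3]. cbn. ring. Qed.
Lemma dot_sym (u w : V3) : dot u w = dot w u.
Proof. destruct u as [[u1 u2] u3], w as [[w1 w2] w3]. cbn. ring. Qed.
Lemma dot_lc2 a u b v w : dot (lc2 a u b v) w = a * dot u w + b * dot v w.
Proof. unfold lc2. rewrite dot_plus, !dot_scal. ring. Qed.
Lemma dot_cross_l (u v : V3) : dot (cross u v) v = 0.
Proof. destruct u as [[u1 u2] u3], v as [[w1 w2] w3]. cbn. ring. Qed.

Lemma is_derive_fst {U W : NormedModule R_AbsRing} (f : R -> U * W) x (l : U * W) :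
  is_derive f x l -> is_derive (fun t => fst (f t)) x (fst l).
Proof. intro H. unfold is_derive in *.
 apply (filterdiff_comp' f (fun t : prod_NormedModule _ U W => fst t) x _ (fun t => fst t)) in H.
 - exact H.
 - apply filterdiff_linear, is_linear_fst.
Qed.
Lemma is_derive_snd {U W : NormedModule R_AbsRing} (f : R -> U * W) x (l : U * W) :
  is_derive f x l -> is_derive (fun t => snd (f t)) x (snd l).
Proof. intro H. unfold is_derive in *.
 apply (filterdiff_comp' f (fun t : prod_NormedModule _ U W => snd t) x _ (fun t => snd t)) in H.
 - exact H.
 - apply filterdiff_linear, is_linear_snd.
Qed.

Lemma is_derive_uniq3 (f : R -> V3) x (l1 l2 : V3) :
  is_derive f x l1 -> is_derive f x l2 -> l1 = l2.
Proof.
 intros H1 H2.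
 destruct l1 as [[a1 a2] a3], l2 as [[b1 b2] b3].
 pose proof (is_derive_unique _ _ _ (is_derive_fst _ _ _ (is_derive_fst _ _ _ H1))) as E1.
 pose proof (is_derive_unique _ _ _ (is_derive_fst _ _ _ (is_derive_fst _ _ _ H2))) as F1.
 pose proof (is_derive_unique _ _ _ (is_derive_snd _ _ _ (is_derive_fst _ _ _ H1))) as E2.
 pose proof (is_derive_unique _ _ _ (is_derive_snd _ _ _ (is_derive_fst _ _ _ H2))) as F2.
 pose proof (is_derive_unique _ _ _ (is_derive_snd _ _ _ H1)) as E3.
 pose proof (is_derive_unique _ _ _ (is_derive_snd _ _ _ H2)) as F3.
 simpl in *. congruence.
Qed.

Lemma loc_int (a b s : R) (P : R -> Prop) : a < s < b ->
  (forall t, a < t < b -> P t) -> locally s P.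
Proof.
 intros [H1 H2] HP.
 assert (He : 0 < Rmin (s - a) (b - s)) by (apply Rmin_pos; lra).
 exists (mkposreal _ He). intros t Ht. apply HP.
 unfold ball in Ht; simpl in Ht; unfold AbsRing_ball, abs, minus, plus, opp in Ht; simpl in Ht.
 apply Rabs_def2 in Ht. destruct Ht as [Ha Hb].
 pose proof (Rmin_l (s-a) (b-s)). pose proof (Rmin_r (s-a) (b-s)). lra.
Qed.
Lemma dot_lc2_r a u b v w : dot w (lc2 a u b v) = a * dot w u + b * dot w v.
Proof. rewrite dot_sym, dot_lc2, (dot_sym u), (dot_sym v). ring. Qed.

Lemma key
  (a b a1 b1 : R)
  (x T g n : R -> V3) (kg kn tg : R -> R)
  (x1 T1 g1 n1 : R -> V3) (kg1 kn1 tg1 : R -> R)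
  (phi : R -> R) (lambda : R) (theta : R -> R) :
  darboux_curve a b x T g n kg kn tg ->
  darboux_curve a1 b1 x1 T1 g1 n1 kg1 kn1 tg1 ->
  (forall s1, a1 < s1 < b1 ->
     a < phi s1 < b /\ ex_derive phi s1 /\
     g (phi s1) = g1 s1 /\
     x (phi s1) = plus (x1 s1) (scal lambda (g1 s1)) /\
     T1 s1 = lc2 (cos (theta s1)) (T (phi s1)) (sin (theta s1)) (n (phi s1)) /\
     n1 s1 = lc2 (- sin (theta s1)) (T (phi s1)) (cos (theta s1)) (n (phi s1))) ->
  forall s1, a1 < s1 < b1 ->
  tg1 s1 = Derive phi s1 * (kg (phi s1) * sin (theta s1) + tg (phi s1) * cos (theta s1)) /\
  cos (theta s1) = Derive phi s1 * (1 + lambda * kg (phi s1)) /\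
  sin (theta s1) = - lambda * Derive phi s1 * tg (phi s1).
Proof.
 intros D D1 H s1 Hs1.
 destruct (H s1 Hs1) as (Hphi & Hex & Hg & Hx & HT1 & Hn1).
 destruct (D _ Hphi) as (Dx & TT & NN & TN & Gd & DT & Dg & Dn).
 destruct (D1 _ Hs1) as (Dx1 & TT1 & NN1 & TN1 & Gd1 & DT1 & Dg1 & Dn1).
 set (s := phi s1) in *.
 set (p := Derive phi s1).
 assert (Dp : is_derive phi s1 p) by (apply Derive_correct; exact Hex).
 assert (E1 : scal p (lc2 (- kg s) (T s) (tg s) (n s))
             = lc2 (- kg1 s1) (T1 s1) (tg1 s1) (n1 s1)).
 { apply (is_derive_uniq3 (fun t => g (phi t)) s1).
   - exact (is_derive_comp g phi s1 _ _ Dg Dp).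
   - apply (is_derive_ext_loc g1).
     + apply (loc_int a1 b1 s1 _ Hs1). intros t Ht. destruct (H t Ht) as (_ & _ & E & _). auto.
     + exact Dg1. }
 assert (E2 : scal p (T s) = plus (T1 s1) (scal lambda (scal p (lc2 (- kg s) (T s) (tg s) (n s))))).
 { rewrite E1.
   apply (is_derive_uniq3 (fun t => x (phi t)) s1).
   - exact (is_derive_comp x phi s1 _ _ Dx Dp).
   - apply (is_derive_ext_loc (fun t => plus (x1 t) (scal lambda (g1 t)))).
     + apply (loc_int a1 b1 s1 _ Hs1). intros t Ht. destruct (H t Ht) as (_ & _ & _ & E & _). auto.
     + apply (is_derive_plus x1 (fun t => scal lambda (g1 t))); [exact Dx1|].
       apply (filterdiff_scal_r_fct (F := locally s1) lambda g1 (fun y => scal y (lc2 (- kg1 s1) (T1 s1) (tg1 s1) (n1 s1)))) in Dg1.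
       * eapply filterdiff_ext_lin; [exact Dg1|]. intro y. simpl.
         rewrite !scal_assoc. f_equal. apply Rmult_comm.
       * intros; apply Rmult_comm. }
 assert (GT : dot (g s) (T s) = 0) by (rewrite Gd; apply dot_cross_l).
 assert (NT : dot (n s) (T s) = 0) by (rewrite dot_sym; exact TN).
 assert (A1 := f_equal (fun v => dot v (n1 s1)) E1). cbv beta in A1.
 assert (A2 := f_equal (fun v => dot v (T s)) E2). cbv beta in A2.
 assert (A3 := f_equal (fun v => dot v (n s)) E2). cbv beta in A3.
 rewrite dot_scal, !dot_lc2, NN1, TN1 in A1.
 rewrite Hn1 in A1. repeat rewrite ?dot_lc2, ?dot_lc2_r in A1.
 rewrite HT1 in A2, A3.
 repeat rewrite ?dot_plus, ?dot_scal, ?dot_lc2 in A2.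
 repeat rewrite ?dot_plus, ?dot_scal, ?dot_lc2 in A3.
 rewrite ?TT, ?TN, ?NT, ?NN in A1, A2, A3.
 split; [|split]; nra.
Qed.
Theorem corollary4
  (a b a1 b1 : R)
  (x T g n : R -> V3) (kg kn tg : R -> R)
  (x1 T1 g1 n1 : R -> V3) (kg1 kn1 tg1 : R -> R)
  (phi : R -> R) (lambda : R) (theta : R -> R) :
  darboux_curve a b x T g n kg kn tg ->
  darboux_curve a1 b1 x1 T1 g1 n1 kg1 kn1 tg1 ->
  lambda <> 0 ->
  (forall s1, a1 < s1 < b1 ->
     a < phi s1 < b /\ ex_derive phi s1 /\
     g (phi s1) = g1 s1 /\
     x (phi s1) = plus (x1 s1) (scal lambda (g1 s1)) /\
     T1 s1 = lc2 (cos (theta s1)) (T (phi s1)) (sin (theta s1)) (n (phi s1)) /\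
     n1 s1 = lc2 (- sin (theta s1)) (T (phi s1)) (cos (theta s1)) (n (phi s1))) ->
  ((forall s, a < s < b -> kg s = 0) ->
     forall s1, a1 < s1 < b1 ->
       tg1 s1 = tg (phi s1) * cos (theta s1)
                * (cos (theta s1) - lambda * tg (phi s1) * sin (theta s1))
                * (Derive phi s1) ^ 2)
  /\
  ((forall s, a < s < b -> tg s = 0) ->
     forall s1, a1 < s1 < b1 ->
       tg1 s1 = kg (phi s1) * (1 + lambda * kg (phi s1))
                * sin (theta s1) * cos (theta s1) * (Derive phi s1) ^ 2).
Proof.
 intros D D1 Hl H. split.
 - intros Hkg s1 Hs1.
   destruct (key a b a1 b1 x T g n kg kn tg x1 T1 g1 n1 kg1 kn1 tg1 phi lambda theta D D1 H s1 Hs1) as (K1 & K2 & K3).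
   destruct (H s1 Hs1) as (Hphi & _).
   rewrite (Hkg _ Hphi) in K1, K2.
   pose proof (sin2_cos2 (theta s1)) as SC. unfold Rsqr in SC.
   rewrite K1.
   set (p := Derive phi s1) in *. set (c := cos (theta s1)) in *. set (sn := sin (theta s1)) in *.
   set (t := tg (phi s1)) in *.
   rewrite K3 in SC |- *. rewrite K2 in SC |- *.
   transitivity (t * p * p * (- lambda * p * t * (- lambda * p * t) +
    p * (1 + lambda * 0) * (p * (1 + lambda * 0)))).
   + rewrite SC. ring.
   + ring.
 - intros Htg s1 Hs1.
   destruct (key a b a1 b1 x T g n kg kn tg x1 T1 g1 n1 kg1 kn1 tg1 phi lambda theta D D1 H s1 Hs1) as (K1 & K2 & K3).
   destruct (H s1 Hs1) as (Hphi & _).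
   rewrite (Htg _ Hphi) in K1, K3.
   rewrite K1, K3. ring.
Qed.
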